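(* Let $G$ be a finite simple connected graph whose block tree has more than one vertex, let $B$ be an end block of $G$, and let $u$ be the unique cut vertex of $G$ contained in $B$. Assume every vertex of $B$ other than $u$ is adjacent to $u$. Let $H$ be the graph obtained from $G$ by contracting $B$ into the vertex $u$ (equivalently, deleting $V(B)\setminus\{u\}$). Then $c_{\infty}(H)\ge c_{\infty}(G)$.
   Context: Cops and Robber with an infinitely fast robber: the game is played on a graph $G$. A set of cops first choose initial vertices (several cops may share a vertex); then the robber, knowing their positions, chooses a vertex. Then the players move in alternating rounds, cops first. In the cops' turn each cop either stays or moves to an adjacent vertex; in the robber's turn she either stays or moves along any path of $G$ starting at her current vertex that contains no vertex currently occupied by a cop. The cops win if at some point a cop moves to the vertex occupied by the robber. $c_{\infty}(G)$ is the minimum number of cops for which the cops have a strategy that guarantees a win. A block of $G$ is either a maximal 2-connected subgraph or an edge not contained in any 2-connected subgraph. The block tree $B(G)$ is the bipartite tree whose vertices are the blocks and cut vertices of $G$, a block adjacent to a cut vertex iff it contains it. End blocks are blocks that are leaves of $B(G)$. *)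

(* Defs.v *)
From Stdlib Require Import ClassicalEpsilon.
From mathcomp Require Import all_boot.
Set Implicit Arguments. Unset Strict Implicit. Unset Printing Implicit Defensive.

Section Game.
Variables (V : finType) (adj : rel V).

Definition cop_move (x y : V) : bool := (x == y) || adj x y.

Definition robber_reach (k : nat) (C : {ffun 'I_k -> V}) (r r' : V) : bool :=
  connect [rel x y | adj x y && (x \notin codom C) && (y \notin codom C)] r r'.

Fixpoint cops_win_within (k : nat) (n : nat) (C : {ffun 'I_k -> V}) (r : V) : Prop :=
  match n with
  | 0 => False
  | n'.+1 => exists C' : {ffun 'I_k -> V},
      (forall i, cop_move (C i) (C' i)) /\
      ((exists i, C' i = r) \/
       (forall r', robber_reach C' r r' -> cops_win_within n' C' r'))
  end.

Definition cop_win (k : nat) : Prop :=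
  exists C0 : {ffun 'I_k -> V}, forall r : V, exists n, cops_win_within n C0 r.

Definition cop_winb (k : nat) : bool :=
  if excluded_middle_informative (cop_win k) then true else false.

Lemma cop_winb_exists : exists k, cop_winb k.
Proof.
exists #|V|; rewrite /cop_winb; case: excluded_middle_informative => // [[]].
exists [ffun i : 'I_#|V| => enum_val i] => r; exists 1%N.
exists [ffun i : 'I_#|V| => enum_val i]; split.
  by move=> i; rewrite /cop_move eqxx.
by left; exists (enum_rank r); rewrite ffunE enum_rankK.
Qed.

Definition c_infty : nat := ex_minn cop_winb_exists.

End Game.

Section Blocks.
Variables (T : finType) (e : rel T).

Definition conn_in (S : {set T}) : Prop :=
  forall x y, x \in S -> y \in S ->
    connect [rel a b | e a b && (a \in S) && (b \in S)] x y.

Definition two_conn (S : {set T}) : Prop :=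
  (3 <= #|S|) /\ conn_in S /\ (forall v, v \in S -> conn_in (S :\ v)).

(* blocks, given by their vertex sets (blocks are induced subgraphs) *)
Definition block (S : {set T}) : Prop :=
  (two_conn S /\ forall S' : {set T}, S \subset S' -> two_conn S' -> S' = S) \/
  (exists x y, e x y /\ S = [set x; y] /\
     forall S' : {set T}, x \in S' -> y \in S' -> ~ two_conn S').

Definition cut_vertex (v : T) : Prop :=
  exists x y, x != v /\ y != v /\ connect e x y /\
    ~ connect [rel a b | e a b && (a != v) && (b != v)] x y.

(* the block tree (blocks + cut vertices) has more than one vertex *)
Definition block_tree_nontrivial : Prop :=
  (exists B1 B2, block B1 /\ block B2 /\ B1 <> B2) \/ (exists v, cut_vertex v).

(* end block = leaf of the block tree = block containing exactly one cut vertex *)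
Definition end_block (B : {set T}) : Prop :=
  block B /\ exists u, u \in B /\ cut_vertex u /\
    forall w, w \in B -> cut_vertex w -> w = u.

Definition induced_rel (S : {set T}) : rel {x : T | x \in S} :=
  fun x y => e (val x) (val y).

End Blocks.
Arguments induced_rel [T] e S.

(* Main.v *)
Require Import Defs.
From Stdlib Require Import ClassicalEpsilon.
From mathcomp Require Import all_boot.
Set Implicit Arguments. Unset Strict Implicit. Unset Printing Implicit Defensive.

Section Generic.
Variable T : finType.

Definition avoid (r : rel T) (y : T) := [rel c d | r c d && (c != y) && (d != y)].

Lemma avoid_sym r y : symmetric r -> symmetric (avoid r y).
Proof. by move=> rs a b /=; rewrite rs andbAC. Qed.

Lemma avoid_to r y x : connect (avoid r y) x y -> x = y.
Proof.
move=> c.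
have cl : closed (avoid r y) [pred z | z == y].
  by move=> a b /andP[/andP[_ ha] hb]; rewrite !inE (negPf ha) (negPf hb).
by move: (closed_connect cl c); rewrite !inE eqxx => /eqP.
Qed.

Lemma path_avoid r y a p : path r a p -> y \notin a :: p -> path (avoid r y) a p.
Proof.
elim: p a => //= b p IH a /andP[rab pp]; rewrite in_cons negb_or => /andP[ya ybp].
move: (ybp); rewrite in_cons negb_or => /andP[yb _].
by rewrite rab eq_sym ya eq_sym yb /= IH.
Qed.

Lemma path_all_conn r y a p x : path r a p -> y \notin a :: p -> x \in a :: p ->
  connect (avoid r y) a x.
Proof. by move=> pp ya; apply: path_connect; apply: path_avoid. Qed.

Lemma L2 r a p x y : symmetric r -> path r a p -> uniq (a :: p) -> x \in a :: p -> x != y ->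
  connect (avoid r y) x a \/ connect (avoid r y) x (last a p).
Proof.
move=> rs; have cs := sym_connect_sym (avoid_sym y rs).
elim: p a => [|b p IH] a /=.
  by move=> _ _; rewrite inE => /eqP-> _; left; apply: connect0.
move=> /andP[rab pth] /andP[anin uq] xin xy.
case xa: (x == a); first by left; rewrite (eqP xa) connect0.
have xin' : x \in b :: p by rewrite in_cons xa in xin.
case ya: (y == a).
  right; move/eqP: ya => ?; subst y.
  have c1 := path_all_conn pth anin xin'.
  have c2 := path_all_conn pth anin (mem_last b p).
  by apply: connect_trans _ c2; rewrite cs.
case: (IH b pth uq xin' xy) => c; [left|by right].
have byy : b != y by apply/eqP => eb; rewrite eb in c; move: (avoid_to c) => exy; rewrite exy eqxx in xy.
apply: (connect_trans c); apply: connect1; rewrite /= rs rab byy eq_sym ya //.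
Qed.

Lemma ear r (B : {set T}) p a : uniq (a :: p) -> path r a p -> a \notin B -> last a p \in B ->
  exists s, exists z, [/\ {subset s <= p}, uniq (a :: s), all (fun x => x \notin B) (a :: s),
    path r a s & z \in B /\ r (last a s) z].
Proof.
elim: p a => [|b p IH] a /=; first by move=> _ _ /negPf->.
move=> /andP[anin uq] /andP[rab pth] aB lB.
case bB: (b \in B).
  by exists [::], b; split => //=; rewrite ?aB ?inE.
have [s [z [sub uqs als ps [zB rz]]]] := IH b uq pth (negbT bB) lB.
exists (b :: s), z; split => //=.
- by move=> x; rewrite !in_cons => /orP[->//|/sub ->]; rewrite orbT.
- move: uqs => /= ->; rewrite andbT; apply: contra anin; rewrite !in_cons => /orP[->//|/sub ->]; by rewrite orbT.
- by rewrite aB.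
- by rewrite rab.
Qed.

Lemma connect_inv (r : rel T) (P : pred T) : (forall x y, P x -> r x y -> P y) ->
  forall x y, connect r x y -> P x -> P y.
Proof.
move=> h x y /connectP[p pth ->]; elim: p x pth => //= b p IH x /andP[rxb pth] px.
exact: IH pth (h _ _ px rxb).
Qed.
End Generic.

Lemma connect_map (T U : finType) (r : rel T) (r' : rel U) (f : T -> U) :
  (forall x y, r x y -> connect r' (f x) (f y)) ->
  forall x y, connect r x y -> connect r' (f x) (f y).
Proof.
move=> h x y /connectP[p pth ->]; elim: p x pth => /= [|b p IH] x; first by rewrite connect0.
by move=> /andP[rxb pth]; apply: connect_trans (h _ _ rxb) (IH _ pth).
Qed.

Section Struct.
Variables (T : finType) (e : rel T).
Hypothesis esym : symmetric e.

Definition R (X : {set T}) := [rel a b | e a b && (a \in X) && (b \in X)].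

Lemma R_sym (X : {set T}) : connect_sym (R X).
Proof. by apply: sym_connect_sym => a b /=; rewrite esym andbAC. Qed.

Lemma R_mono (X Y : {set T}) (x y : T) : X \subset Y -> connect (R X) x y -> connect (R Y) x y.
Proof.
move=> sXY; apply: connect_sub => a b /= /andP[/andP[eab aX] bX]; apply: connect1.
by rewrite /= eab (subsetP sXY _ aX) (subsetP sXY _ bX).
Qed.

Lemma combine (Z X : {set T}) : conn_in e Z -> Z \subset X ->
  (forall x, x \in X -> exists2 b, b \in Z & connect (R X) x b) -> conn_in e X.
Proof.
move=> cZ ZX h a c aX cX.
have [b1 b1Z c1] := h a aX; have [b2 b2Z c2] := h c cX.
apply: connect_trans c1 _; apply: connect_trans (R_mono ZX (cZ b1 b2 b1Z b2Z)) _.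
by rewrite R_sym.
Qed.

Lemma addpt (X : {set T}) t c : conn_in e (X :\ t) -> t \in X -> c \in X -> c != t -> e t c ->
  conn_in e X.
Proof.
move=> cXt tX cX ct etc.
have h : forall a, a \in X -> connect (R X) a c.
  move=> a aX; case at_: (a == t).
    by rewrite (eqP at_); apply: connect1; rewrite /= etc tX cX.
  apply: (R_mono (subD1set X t)); apply: cXt; by rewrite in_setD1 ?at_ ?ct.
move=> a b aX bX; apply: connect_trans (h a aX) _; by rewrite R_sym; apply: h.
Qed.

Lemma avoidR (X : {set T}) (y : T) : forall a b, connect (avoid (R X) y) a b -> connect (R (X :\ y)) a b.
Proof.
move=> a b; apply: connect_sub => c d /= /andP[/andP[/andP[/andP[ecd cX] dX] cy] dy].
by apply: connect1; rewrite /= !in_setD1 ecd cX dX cy dy.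
Qed.

Lemma path_R (X : {set T}) a p : path e a p -> all (fun z => z \in X) (a :: p) -> path (R X) a p.
Proof.
elim: p a => //= b p IH a /andP[eab pp] /and3P[aX bX al].
by rewrite eab aX bX /= IH //= bX.
Qed.

Variables (B : {set T}) (u : T).
Hypothesis uB : u \in B.
Hypothesis hconn : forall x y, connect e x y.
Hypothesis Bblock : block e B.
Hypothesis hcut : forall w, w \in B -> cut_vertex e w -> w = u.

Lemma nbr v w : v \in B -> v != u -> e v w -> w \in B.
Proof.
move=> vB vu evw; apply/negPn/negP => wB.
have wv : w != v by apply: contraNneq wB => ->.
have ncut : ~ cut_vertex e v by move=> /(hcut vB) /eqP; rewrite (negPf vu).
have cwu : connect (avoid e v) w u.
  case: (boolP (connect (avoid e v) w u)) => // nc; exfalso; apply: ncut.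
  exists w, u; do !split; [by []| by rewrite eq_sym vu| exact: hconn| exact: (negP nc)].
case/connectP: cwu => p pth ul.
move: ul; case: (shortenP pth) => p' pth' uq _ ul.
have lB : last w p' \in B by rewrite -ul.
have [s [z [_ uqs alls pths [zB ez]]]] := ear uq pth' wB lB.
move: ez => /= /andP[/andP[ez lv] zv].
have pe : path e w s by apply: sub_path pths => a b /andP[/andP[->]].
set S' := B :|: [set x in w :: s].
have qS : forall x, x \in w :: s -> x \in S'.
  by move=> x xq; apply/setUP; right; rewrite in_set.
have BS : B \subset S' := subsetUl _ _.
have vq : v \notin w :: s by apply/negP => /(allP alls) /=; rewrite vB.
have zq : z \notin w :: s by apply/negP => /(allP alls) /=; rewrite zB.
have lq : last w s \in w :: s := mem_last w s.
have wq : w \in w :: s := mem_head w s.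
have pS : path (R S') w s.
  apply: (path_R (X:=S') pe). apply/allP => x; apply: qS.
have Rsym : symmetric (R S') by move=> a b /=; rewrite esym andbAC.
have cs := fun y => sym_connect_sym (avoid_sym y Rsym).
have ewv : e w v by rewrite esym.
have cB : forall t, conn_in e (B :\ t).
  move=> t; case: Bblock => [[[_ [cB0 cB1]] _]|[x [y [exy [Bxy _]]]]].
    case tB: (t \in B); first exact: cB1.
    have -> : B :\ t = B by apply/setP => c; rewrite in_setD1; case: eqP => // ->; rewrite tB.
    exact: cB0.
  move=> a b aS bS; case ab: (a == b); first by rewrite (eqP ab) connect0.
  apply: connect1; rewrite /= aS bS !andbT.
  move: aS bS ab; rewrite Bxy !inE => /andP[_ /orP[/eqP->|/eqP->]] /andP[_ /orP[/eqP->|/eqP->]] ab;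
    first [done | by rewrite eqxx in ab | by rewrite esym].
have cX : forall y, conn_in e (S' :\ y).
  move=> y; apply: (combine (Z := B :\ y)) => //; first exact: setSD.
  move=> x; rewrite in_setD1 => /andP[xy]; case/setUP => [xB | xE].
    by exists x; [rewrite in_setD1 xy xB | exact: connect0].
  have xq : x \in w :: s by rewrite in_set in xE.
  case yq: (y \in w :: s).
    have vy : v != y by apply: contraNneq vq => ->; rewrite yq.
    have zy : z != y by apply: contraNneq zq => ->; rewrite yq.
    case: (L2 Rsym pS uqs xq xy) => c.
      have wy : w != y.
        by apply/eqP => wy; rewrite wy in c; move/avoid_to: c => /eqP; rewrite (negPf xy).
      exists v; first by rewrite in_setD1 vy vB.
      apply: connect_trans (avoidR c) (connect1 _).
      by rewrite /= !in_setD1 ewv wy vy (qS _ wq) (subsetP BS _ vB).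
    have ly : last w s != y.
      by apply/eqP => ly; rewrite ly in c; move/avoid_to: c => /eqP; rewrite (negPf xy).
    exists z; first by rewrite in_setD1 zy zB.
    apply: connect_trans (avoidR c) (connect1 _).
    by rewrite /= !in_setD1 ez ly zy (qS _ lq) (subsetP BS _ zB).
  have yq' : y \notin w :: s by rewrite yq.
  have c1 : connect (avoid (R S') y) w x := path_all_conn pS yq' xq.
  have c2 := path_all_conn pS yq' lq.
  have wy : w != y by apply/eqP => h; move: yq'; rewrite -h wq.
  have cxw : connect (avoid (R S') y) x w by rewrite cs.
  case vy: (v == y).
    have zy : z != y by rewrite -(eqP vy).
    have ly : last w s != y by apply/eqP => h; move: yq'; rewrite -h lq.
    exists z; first by rewrite in_setD1 zy zB.
    apply: connect_trans (avoidR (connect_trans cxw c2)) (connect1 _).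
    by rewrite /= !in_setD1 ez ly zy (qS _ lq) (subsetP BS _ zB).
  exists v; first by rewrite in_setD1 vy vB.
  apply: connect_trans (avoidR cxw) (connect1 _).
  by rewrite /= !in_setD1 ewv wy vy (qS _ wq) (subsetP BS _ vB).
have cS : conn_in e S'.
  by apply: (addpt (cX w) (qS _ wq) (subsetP BS _ vB)) => //; rewrite eq_sym.
have card3 : 3 <= #|S'|.
  have h2 : #|[set u; v]| = 2 by rewrite cards2 eq_sym vu.
  have : #|w |: B| <= #|S'|.
    apply: subset_leq_card; apply/subsetP => x; rewrite in_setU1 => /orP[/eqP->|xB].
      exact: qS.
    exact: (subsetP BS _ xB).
  apply: leq_trans; rewrite cardsU1 wB add1n ltnS -h2.
  by apply: subset_leq_card; apply/subsetP => x; rewrite !inE => /orP[/eqP->|/eqP->].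
have tc : two_conn e S' := conj card3 (conj cS (fun y _ => cX y)).
case: Bblock => [[_ max]|[x [y [_ [Bxy nt]]]]].
  have eqS := max S' BS tc.
  by move: (qS _ wq); rewrite eqS (negPf wB).
apply: (nt S') => //; apply: (subsetP BS); rewrite Bxy !inE eqxx ?orbT //.
Qed.
End Struct.

Lemma mono (V : finType) (adj : rel V) k n (C : {ffun 'I_k -> V}) r :
  cops_win_within adj n C r -> cops_win_within adj n.+1 C r.
Proof.
elim: n C r => // n IH C r [C' [mv [cap|rest]]]; exists C'; split => //; first by left.
by right => r' h; apply: IH; apply: rest.
Qed.

Lemma mono1 (V : finType) (adj : rel V) k n (C : {ffun 'I_k -> V}) r :
  cops_win_within adj 1 C r -> cops_win_within adj n.+1 C r.
Proof. by elim: n => // n IH h; apply: mono; apply: IH. Qed.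

Section Sim.
Variables (T : finType) (e : rel T) (B : {set T}) (u : T).
Hypothesis esym : symmetric e.
Hypothesis uB : u \in B.
Hypothesis hconn : forall x y, connect e x y.
Hypothesis Bblock : block e B.
Hypothesis hcut : forall w, w \in B -> cut_vertex e w -> w = u.
Hypothesis star : forall v, v \in B -> v != u -> e u v.

Local Notation S := (~: (B :\ u)).
Local Notation HV := {x : T | x \in S}.
Local Notation eH := (induced_rel e S).

Lemma uS : u \in S.
Proof. by rewrite in_setC in_setD1 eqxx. Qed.

Definition fH (x : T) : HV := insubd (exist _ u uS) x.
Lemma valf x : val (fH x) = if x \in S then x else u.
Proof. by rewrite val_insubd. Qed.
Definition liftC k (C : {ffun 'I_k -> HV}) : {ffun 'I_k -> T} := [ffun i => val (C i)].

Lemma notS x : (x \notin S) = (x \in B :\ u).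
Proof. by rewrite in_setC negbK. Qed.

Let nb := nbr esym uB hconn Bblock hcut.

Lemma sim n k (C : {ffun 'I_k -> HV}) r :
  cops_win_within eH n C (fH r) -> cops_win_within e n.+1 (liftC C) r.
Proof.
elim: n C r => // n IH C r [C' [mv cap]].
exists (liftC C'); split.
  move=> i; rewrite !ffunE; move: (mv i); rewrite /cop_move => /orP[/eqP->|h].
    by rewrite eqxx.
  by apply/orP; right; exact: h.
case: cap => [[i ci]|rest].
  case rS: (r \in S).
    by left; exists i; rewrite ffunE ci valf rS.
  right => r' reach.
  have rB : r \in B :\ u by rewrite -notS rS.
  have ci' : liftC C' i = u by rewrite ffunE ci valf rS.
  have r'B : r' \in B :\ u.
    apply: (connect_inv (P := [pred z | z \in B :\ u]) _ reach rB) => x y /= xB /andP[/andP[exy _] yC].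
    move: xB; rewrite in_setD1 => /andP[xu xB]; rewrite in_setD1 (nb xB xu exy) andbT.
    by apply: contraNneq yC => ->; apply/codomP; exists i; rewrite ci'.
  apply: mono1.
  exists [ffun j => if j == i then r' else liftC C' j]; split.
    move=> j; rewrite [X in cop_move _ _ X]ffunE; case: (j =P i) => [->|_]; last by rewrite /cop_move eqxx.
    rewrite ci' /cop_move; apply/orP; right.
    by move: r'B; rewrite in_setD1 => /andP[h1 h2]; apply: star.
  by left; exists i; rewrite ffunE eqxx.
right => r' reach; apply: IH; apply: rest.
move: reach; rewrite /robber_reach; apply: connect_map.
move=> x y /andP[/andP[exy xC] yC].
have nC : forall z, z \in S -> z \notin codom (liftC C') -> fH z \notin codom C'.
  move=> z zS zC; apply: contra zC => /codomP[j hj]; apply/codomP; exists j.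
  by rewrite ffunE -hj valf zS.
case xS: (x \in S); case yS: (y \in S).
- apply: connect1; rewrite /= !nC // andbT.
  by rewrite /induced_rel !valf xS yS exy.
- have : y \in B :\ u by rewrite -notS yS.
  rewrite in_setD1 => /andP[yu yB].
  have eyx : e y x by rewrite esym.
  have xB := nb yB yu eyx.
  have xu : x = u by move: xS; rewrite in_setC in_setD1 xB andbT negbK => /eqP.
  have -> : fH x = fH y by apply: val_inj; rewrite !valf xS yS xu.
  exact: connect0.
- have : x \in B :\ u by rewrite -notS xS.
  rewrite in_setD1 => /andP[xu xB].
  have yB := nb xB xu exy.
  have yu : y = u by move: yS; rewrite in_setC in_setD1 yB andbT negbK => /eqP.
  have -> : fH x = fH y by apply: val_inj; rewrite !valf xS yS yu.
  exact: connect0.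
- have -> : fH x = fH y by apply: val_inj; rewrite !valf xS yS.
  exact: connect0.
Qed.

Lemma winH k : cop_win eH k -> cop_win e k.
Proof.
move=> [C0 h]; exists (liftC C0) => r; have [n hn] := h (fH r).
by exists n.+1; exact: sim.
Qed.

Lemma final : c_infty eH >= c_infty e.
Proof.
have hk : cop_winb eH (c_infty eH) by rewrite /c_infty; case: ex_minnP.
have L : forall j, cop_winb e j -> c_infty e <= j.
  by move=> j; rewrite /c_infty; case: ex_minnP => m _; apply.
apply: L; move: hk; rewrite /cop_winb.
case: excluded_middle_informative => // h _.
by case: excluded_middle_informative => // [[]]; apply: winH.
Qed.
End Sim.

Theorem mainTheorem11 (T : finType) (e : rel T) (B : {set T}) (u : T) :
  symmetric e -> irreflexive e -> (forall x y, connect e x y) ->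
  block_tree_nontrivial e ->
  end_block e B ->
  u \in B -> cut_vertex e u -> (forall w, w \in B -> cut_vertex e w -> w = u) ->
  (forall v, v \in B -> v != u -> e u v) ->
  c_infty (induced_rel e (~: (B :\ u))) >= c_infty e.
Proof.
move=> esym _ hconn _ [Bb _] uB _ hcut star.
exact: (final esym uB hconn Bb hcut star).
Qed.
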